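(* Let $X$ be a real Banach space with a normalized Schauder basis $(e_j)$ which is $(C_u,C_s)$-subsymmetric, and let $(e_j^* )$ be the biorthogonal functionals. Let $T\colon X\to X$ be a bounded linear operator with $\delta:=\inf_j|\langle Te_j,e_j^*\rangle|>0$. Then for every $\eta>0$ there exist bounded linear operators $A,B\colon X\to X$ with $I_X=ATB$ and $$\|A\|\cdot\|B\|\leq \frac{2C_u^5C_s^3}{\delta}+\eta.$$ In other words, $(e_j)$ has the $\bigl(\tfrac{2C_u^5C_s^3}{\delta}\bigr)$-factorization property.
   Context: $(e_j)$ is $C_u$-unconditional if for all scalar sequences $(a_j),(\gamma_j)$ for which the series converge, $\|\sum_j\gamma_ja_je_j\|\le C_u\sup_k|\gamma_k|\,\|\sum_ja_je_j\|$. It is $C_s$-spreading if for every increasing sequence $(n_j)$ of natural numbers and all scalars $(a_j)$ for which the series converge, $C_s^{-1}\|\sum_ja_je_{n_j}\|\le\|\sum_ja_je_j\|\le C_s\|\sum_ja_je_{n_j}\|$. It is $(C_u,C_s)$-subsymmetric if it is both $C_u$-unconditional and $C_s$-spreading. $I_X$ denotes the identity operator on $X$. *)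

(* Defs.v *)
From HB Require Import structures.
From mathcomp Require Import all_boot all_order all_algebra.
From mathcomp Require Import all_classical all_reals all_analysis.
Set Implicit Arguments. Unset Strict Implicit. Unset Printing Implicit Defensive.
Import Order.TTheory GRing.Theory Num.Theory.
Import numFieldNormedType.Exports.
Local Open Scope classical_set_scope.
Local Open Scope ring_scope.

Section Defs.
Variables (R : realType) (X : normedModType R).

Definition schauder_basis (e : nat -> X) : Prop :=
  forall x : X, exists! a : nat -> R,
    series (fun j => a j *: e j) @ \oo --> x.

Definition coord_functionals (e : nat -> X) (estar : nat -> X -> R) : Prop :=
  forall x : X, series (fun j => estar j x *: e j) @ \oo --> x.

Definition normalized (e : nat -> X) : Prop := forall j, `|e j| = 1.

(* C_u-unconditional; sup_k |gamma_k| <= M (the inequality is trivial when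
   gamma is unbounded) *)
Definition unconditional (Cu : R) (e : nat -> X) : Prop :=
  forall (a gamma : nat -> R) (M : R), (forall k, `|gamma k| <= M) ->
    cvgn (series (fun j => a j *: e j)) ->
    cvgn (series (fun j => (gamma j * a j) *: e j)) ->
    `|limn (series (fun j => (gamma j * a j) *: e j))|
      <= Cu * M * `|limn (series (fun j => a j *: e j))|.

Definition spreading (Cs : R) (e : nat -> X) : Prop :=
  forall (n : nat -> nat) (a : nat -> R),
    {homo n : i j / (i < j)%N >-> (i < j)%N} ->
    cvgn (series (fun j => a j *: e j)) ->
    cvgn (series (fun j => a j *: e (n j))) ->
    Cs^-1 * `|limn (series (fun j => a j *: e (n j)))|
      <= `|limn (series (fun j => a j *: e j))|
    /\ `|limn (series (fun j => a j *: e j))|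
      <= Cs * `|limn (series (fun j => a j *: e (n j)))|.

Definition subsymmetric (Cu Cs : R) (e : nat -> X) : Prop :=
  unconditional Cu e /\ spreading Cs e.

Definition bounded_op (A : {linear X -> X}) : Prop := continuous A.

Definition opnorm (A : X -> X) : R :=
  inf [set M : R | 0 <= M /\ forall x, `|A x| <= M * `|x|].

End Defs.

(* Main.v *)
Require Import Defs.
From HB Require Import structures.
From mathcomp Require Import all_boot all_order all_algebra.
From mathcomp Require Import all_classical all_reals all_analysis.
From mathcomp Require Import lra ring.
Import Order.TTheory GRing.Theory Num.Theory.
Import numFieldNormedType.Exports.
Local Open Scope classical_set_scope.
Local Open Scope ring_scope.

Section Generic.
Variables (R : realType) (X : completeNormedModType R).

Lemma g_cvg_fin (u : nat -> X) (N : nat) :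
  (forall n, (N <= n)%N -> u n = 0) -> series u @ \oo --> series u N.
Proof.
move=> uN; apply: cvg_near_cst; exists N => // n /= Nn.
apply/eqP; rewrite -subr_eq0 sub_series_geq //.
by apply/eqP; rewrite big_nat big1 // => k /andP[Nk _]; apply: uN.
Qed.

Lemma g_cauchyS (u : nat -> X) :
  (forall eps : R, 0 < eps -> exists N, forall m n, (N <= m)%N -> (m <= n)%N ->
      `|\sum_(m <= k < n) u k| <= eps) -> cvgn (series u).
Proof.
move=> H; apply/cauchy_cvgP/cauchy_seriesP => eps eps0.
have [N HN] := H (eps / 2) (divr_gt0 eps0 (ltr0Sn _ 1)).
exists ([set n | (N <= n)%N], [set n | (N <= n)%N]).
  by split; exists N.
move=> [m n] /= [Nm Nn].
have [mn|nm] := leqP m n.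
  by apply: le_lt_trans (HN m n Nm mn) _; rewrite ltr_pdivrMr // ltr_pMr // ltr1n.
by rewrite big_geq ?normr0 // ltnW.
Qed.

Lemma g_cauchy_of_cvg (u : nat -> X) : cvgn (series u) ->
  forall eps : R, 0 < eps -> exists N, forall m n, (N <= m)%N ->
      `|\sum_(m <= k < n) u k| <= eps.
Proof.
move=> /cvg_ex [l Hl] eps eps0.
move: Hl => /cvgrPdist_le /(_ (eps / 2) (divr_gt0 eps0 (ltr0Sn _ 1))).
move=> [N _ HN]; exists N => m n Nm.
have [mn|nm] := leqP m n; last by rewrite big_geq ?normr0 ?ltW // ltnW.
rewrite -sub_series_geq //.
have -> : series u n - series u m = (l - series u m) - (l - series u n).
  by rewrite opprB [RHS]addrC addrA subrK.
rewrite (le_trans (ler_normB _ _)) // (splitr eps) lerD //; apply: HN => //=.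
exact: leq_trans Nm mn.
Qed.

Lemma g_limle (u : nat -> X) (v : nat -> R) l m :
  u @ \oo --> l -> v @ \oo --> m -> (forall n, `|u n| <= v n) -> `|l| <= m.
Proof.
move=> ul vm uv.
have nu : (fun n => `|u n|) @ \oo --> `|l| by apply: cvg_norm.
rewrite -(cvg_lim _ nu) // -(cvg_lim _ vm) //.
apply: ler_lim; [by apply/cvg_ex; exists `|l| | by apply/cvg_ex; exists m|].
by apply: nearW.
Qed.

Lemma g_geo (u : nat -> X) (C r : R) : 0 <= C -> 0 <= r -> r < 1 ->
  (forall n, `|u n| <= C * r ^+ n) ->
  cvgn (series u) /\ `|limn (series u)| <= C / (1 - r).
Proof.
move=> C0 r0 r1 Hu.
have rn : `|r| < 1 by rewrite ger0_norm.
have cg : cvgn (series u).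
  apply: normed_cvg.
  apply: (@series_le_cvg _ _ (geometric C r)).
  - by move=> n; rewrite normr_ge0.
  - by move=> n; rewrite /= mulr_ge0 // exprn_ge0.
  - by move=> n; apply: Hu.
  - exact: is_cvg_geometric_series.
split => //.
apply: (@g_limle (series u) (series (geometric C r))).
- exact: cg.
- exact: cvg_geometric_series.
- move=> n; rewrite /series /= (le_trans (ler_norm_sum _ _ _)) //.
  by apply: ler_sum => k _; apply: Hu.
Qed.

Lemma g_comp (u v : nat -> X) (K : R) : 0 <= K ->
  (forall m n, (m <= n)%N -> `|\sum_(m <= k < n) v k| <= K * `|\sum_(m <= k < n) u k|) ->
  cvgn (series u) -> cvgn (series v) /\ `|limn (series v)| <= K * `|limn (series u)|.
Proof.
move=> K0 H cu.
have cv : cvgn (series v).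
  apply: g_cauchyS => eps eps0.
  have K1 : 0 < K + 1 by rewrite ltr_wpDl.
  have [N HN] := g_cauchy_of_cvg u cu _ (divr_gt0 eps0 K1).
  exists N => m n Nm mn; apply: le_trans (H m n mn) _.
  apply: le_trans (ler_wpM2l K0 (HN m n Nm)) _.
  rewrite mulrA ler_pdivrMr //; nra.
split => //.
apply: (@g_limle (series v) (fun n => K * `|series u n|)).
- exact: cv.
- by apply: cvgMr; apply: cvg_norm; apply: cu.
- by move=> n; apply: H.
Qed.

Lemma g_subseq (u : nat -> X) (q : nat -> nat) (l : X) :
  (forall n, (n <= q n)%N) -> u @ \oo --> l -> (fun n => u (q n)) @ \oo --> l.
Proof.
move=> qn /cvgrPdist_le ul; apply/cvgrPdist_le => eps e0.
have [N _ HN] := ul eps e0; exists N => // n /= Nn.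
by apply: HN; exact: leq_trans Nn (qn n).
Qed.

Lemma g_lin_cont (f : {linear X -> X}) (M : R) :
  (forall x, `|f x| <= M * `|x|) -> continuous f.
Proof.
move=> Hf; apply: bounded_linear_continuous; apply/linear_boundedP.
near=> r => x; apply: le_trans (Hf x) _; apply: ler_wpM2r => //.
Unshelve. all: by end_near. Qed.

Lemma g_opnorm (f : X -> X) (M : R) : 0 <= M ->
  (forall x, `|f x| <= M * `|x|) -> 0 <= opnorm f /\ opnorm f <= M.
Proof.
move=> M0 Hf; split.
  apply: lb_le_inf; first by exists M.
  by move=> y [].
apply: ge_inf; last by split.
by exists 0 => y [].
Qed.

Lemma g_lins (u : nat -> X -> X) :
  (forall n (c : R) x y, u n (c *: x + y) = c *: u n x + u n y) ->
  (forall x, cvgn (series (fun n => u n x))) ->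
  linear (fun x => limn (series (fun n => u n x))).
Proof.
move=> Hl Hc c x y /=.
have -> : series (fun n => u n (c *: x + y)) =
    (fun N => c *: series (fun n => u n x) N + series (fun n => u n y) N).
  apply/funext => N; rewrite /series /= scaler_sumr -big_split /=.
  by apply: eq_bigr => n _; rewrite Hl.
apply: cvg_lim => //; apply: cvgD; last exact: Hc.
by apply: cvgZr; exact: Hc.
Qed.

End Generic.
Arguments g_cvg_fin {R X}. Arguments g_cauchyS {R X}. Arguments g_cauchy_of_cvg {R X}.
Arguments g_limle {R X}. Arguments g_geo {R X}. Arguments g_comp {R X}.
Arguments g_subseq {R X}. Arguments g_lin_cont {R X}. Arguments g_opnorm {R X}. Arguments g_lins {R X}.

Definition infin (S : nat -> Prop) := forall N, exists m, (N <= m)%N /\ S m.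

Lemma p_pig (R : realType) (s : nat -> R) (tau : R) : 0 < tau -> forall n (c : R) (S : nat -> Prop),
  infin S -> (forall m, S m -> c <= s m <= c + n%:R * tau) ->
  exists S' : nat -> Prop, (forall m, S' m -> S m) /\ infin S' /\
     (forall m m', S' m -> S' m' -> `|s m - s m'| <= tau).
Proof.
move=> tau0; elim=> [|n IH] c S iS Hs.
  exists S; split=> //; split=> // m m' /Hs + /Hs.
  rewrite mul0r addr0 => /andP[h1 h2] /andP[h3 h4].
  have -> : s m = c by apply/eqP; rewrite eq_le h1 h2.
  have -> : s m' = c by apply/eqP; rewrite eq_le h3 h4.
  by rewrite subrr normr0 ltW.
have [P|nP] := pselect (infin (fun m => S m /\ s m <= c + tau)).
  exists (fun m => S m /\ s m <= c + tau); split; first by move=> m [].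
  split => // m m' [Sm hm] [Sm' hm'].
  have /andP[h1 _] := Hs m Sm; have /andP[h3 _] := Hs m' Sm'.
  rewrite ler_norml; apply/andP; split; lra.
have [N0 HN0] : exists N0, forall m, (N0 <= m)%N -> S m -> c + tau < s m.
  apply: contrapT => H; apply: nP => N.
  apply: contrapT => H2; apply: H; exists N => m Nm Sm.
  by rewrite ltNge; apply/negP => hm; apply: H2; exists m.
have i1 : infin (fun m => S m /\ (N0 <= m)%N).
  move=> N; have [m [Nm Sm]] := iS (maxn N N0).
  by exists m; rewrite geq_max in Nm; case/andP: Nm => -> ->.
have i2 : forall m, S m /\ (N0 <= m)%N -> c + tau <= s m <= c + tau + n%:R * tau.
  move=> m [Sm Nm]; have /andP[_ hu] := Hs m Sm; have hl := HN0 m Nm Sm.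
  rewrite -natr1 in hu; apply/andP; split; first by rewrite ltW.
  lra.
have [S' [h1 [h2 h3]]] := IH (c + tau) _ i1 i2.
by exists S'; split => // m /h1 [].
Qed.

Lemma p_refine (R : realType) (s : nat -> R) (K tau : R) : 0 < tau ->
  (forall m, `|s m| <= K) -> forall S : nat -> Prop, infin S ->
  exists S' : nat -> Prop, (forall m, S' m -> S m) /\ infin S' /\
     (forall m m', S' m -> S' m' -> `|s m - s m'| <= tau).
Proof.
move=> tau0 HK S iS.
have K0 : 0 <= K by apply: le_trans (HK 0%N).
have x0 : 0 <= (K + K) / tau by rewrite divr_ge0 // ?addr_ge0 // ltW.
have := archi_boundP x0; set n := Num.Def.archi_bound _ => hn.
apply: (p_pig _ s tau tau0 n (- K) S iS) => m _.
have := HK m; rewrite ler_norml => /andP[h1 h2]; rewrite h1 /=.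
rewrite ltr_pdivrMr // in hn; lra.
Qed.

Fixpoint seqpr (f : nat -> nat -> nat * nat) (j : nat) : nat * nat :=
  match j with 0%N => f 0%N 0%N | j'.+1 => f (seqpr f j').2.+1 j end.

Lemma arith (R : realFieldType) (Cu Cs d eta : R) : 1 <= Cu -> 1 <= Cs -> 0 < d -> 0 < eta ->
  exists k : R, [/\ 0 < k, k <= d / 2, Cu * (4 * k / d) / (1 - 2^-1) / (1 - 2^-1) < 1 &
      Cu * (d - k)^-1 * (Cs * Cu) / (1 - Cu * (4 * k / d) / (1 - 2^-1) / (1 - 2^-1)) * (2 * Cs)
        <= 2 * Cu ^+ 5 * Cs ^+ 3 / d + eta].
Proof.
move=> Cu1 Cs1 d0 e0.
pose W := 1 + 16 * Cu; pose L := 2 * (Cu * Cu) * (Cs * Cs).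
pose k := eta * d * d / (W * (L + eta * d)); exists k.
have W0 : 0 < W by rewrite /W; lra.
have L0 : 0 < L by rewrite /L !mulr_gt0 //; lra.
have M0 : 0 < L + eta * d by rewrite addr_gt0 // mulr_gt0.
have k0 : 0 < k by rewrite /k; apply: divr_gt0; rewrite ?mulr_gt0.
have epsE : Cu * (4 * k / d) / (1 - 2^-1) / (1 - 2^-1) = 16 * Cu * k / d.
  by field; rewrite gt_eqF.
rewrite epsE.
have h2 : d - W * k = d * L / (L + eta * d).
  by rewrite /k; field; rewrite !gt_eqF.
have h3 : 0 < d - W * k by rewrite h2; apply: divr_gt0 => //; apply: mulr_gt0.
have h5 : 16 * Cu * k / d < 1.
  rewrite ltr_pdivrMr //; move: h3; rewrite /W; nra.
have h6 : k <= d / 2.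
  rewrite ler_pdivlMr //; move: h3; rewrite /W; nra.
have D0 : 0 < (d - k) * (1 - 16 * Cu * k / d).
  by rewrite mulr_gt0 // subr_gt0 //; move: h3; rewrite /W; nra.
have h4 : d - W * k <= (d - k) * (1 - 16 * Cu * k / d).
  have -> : (d - k) * (1 - 16 * Cu * k / d) = d - W * k + 16 * Cu * k * k / d.
    by rewrite /W; field; rewrite gt_eqF.
  rewrite lerDl; apply: divr_ge0; last exact: ltW.
  have hk : 0 <= k by exact: ltW.
  have hC : 0 <= Cu by lra.
  have hCk : 0 <= Cu * k by apply: mulr_ge0.
  have hCkk : 0 <= Cu * k * k by apply: mulr_ge0.
  lra.
split => //.
have -> : Cu * (d - k)^-1 * (Cs * Cu) / (1 - 16 * Cu * k / d) * (2 * Cs) =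
          L / ((d - k) * (1 - 16 * Cu * k / d)).
  have a1 : 0 < d - 16 * Cu * k by move: h3; rewrite /W; nra.
  have a2 : 0 < d - k by move: h3; rewrite /W; nra.
  by rewrite /L; field; rewrite !gt_eqF.
apply: (@le_trans _ _ (L / (d - W * k))).
  by rewrite ler_pM2l // lef_pV2 // posrE.
rewrite h2 invf_div mulrA.
have -> : L * (L + eta * d) / (d * L) = L / d + eta by field; rewrite !gt_eqF.
rewrite lerD2r ler_pM2r ?invr_gt0 // /L.
have c2 : 1 <= Cu * Cu * Cu by rewrite -[1]mulr1 -[1 * 1]mulr1; rewrite !ler_pM //; lra.
have -> : 2 * Cu ^+ 5 * Cs ^+ 3 = (2 * (Cu * Cu) * (Cs * Cs)) * (Cu * Cu * Cu * Cs).
  by ring.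
rewrite ler_peMr ?mulr_ge0 //; try lra.
rewrite -[1]mulr1 ler_pM //; lra.
Qed.

Section Basis.
Variables (R : realType) (X : completeNormedModType R) (e : nat -> X)
  (estar : nat -> X -> R) (Cu Cs : R).
Hypotheses (Hb : schauder_basis e) (Hn : normalized e) (Hu : unconditional Cu e)
  (Hs : spreading Cs e) (Hc : coord_functionals e estar).

Lemma b_finsum (f : nat -> X) m n :
  \sum_(0 <= k < n) (if (m <= k)%N then f k else 0) = \sum_(m <= k < n) f k.
Proof.
have [mn|nm] := leqP m n.
  rewrite (big_cat_nat (leq0n m) mn) /= [X in X + _]big_nat big1.
    by rewrite add0r; apply: eq_big_nat => k /andP[-> _].
  by move=> k /andP[_ km]; rewrite leqNgt km.
rewrite [RHS](big_geq (ltnW nm)) big_nat big1 // => k /andP[_ kn].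
by rewrite leqNgt (ltn_trans kn nm).
Qed.

Lemma b_lim_fin (u : nat -> X) N : (forall n, (N <= n)%N -> u n = 0) ->
  cvgn (series u) /\ limn (series u) = series u N.
Proof.
move=> H; have h := g_cvg_fin _ _ H; split; last exact: cvg_lim h.
by apply/cvg_ex; exists (series u N).
Qed.

Lemma b_coord (a : nat -> R) (x : X) :
  series (fun j => a j *: e j) @ \oo --> x -> forall k, estar k x = a k.
Proof.
move=> Hx k; have [a0 [_ U]] := Hb x.
have h1 := U a Hx; have h2 := U (fun j => estar j x) (Hc x).
by rewrite -[estar k x]/((fun j => estar j x) k) -h2 h1.
Qed.

Lemma b_lin k (c : R) (x y : X) :
  estar k (c *: x + y) = c * estar k x + estar k y.
Proof.
apply: (b_coord (fun j => c * estar j x + estar j y)).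
have -> : series (fun j => (c * estar j x + estar j y) *: e j) =
    (fun n => c *: series (fun j => estar j x *: e j) n +
              series (fun j => estar j y *: e j) n).
  apply/funext => n; rewrite /series /= scaler_sumr -big_split /=.
  by apply: eq_bigr => j _; rewrite scalerDl scalerA.
apply: cvgD; last exact: Hc.
by apply: cvgZr; exact: Hc.
Qed.

Lemma b_e k j : estar k (e j) = (k == j)%:R.
Proof.
apply: (b_coord (fun k => (k == j)%:R)).
have := @g_cvg_fin R X (fun k => (k == j)%:R *: e k) j.+1.
rewrite seriesSr eqxx scale1r /series /= big_nat big1 ?add0r.
- apply => n jn; have : n != j by rewrite neq_ltn jn orbT.
  by move/negbTE => ->; rewrite scale0r.
- by move=> i /andP[_ ij]; rewrite (ltn_eqF ij) scale0r.
Qed.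

Lemma b_ufin (a g : nat -> R) (M : R) m n : (forall k, `|g k| <= M) ->
  `|\sum_(m <= k < n) (g k * a k) *: e k| <= Cu * M * `|\sum_(m <= k < n) a k *: e k|.
Proof.
move=> Hg.
pose a' := fun k => if (m <= k)%N && (k < n)%N then a k else 0.
have z1 : forall k, (n <= k)%N -> a' k *: e k = 0.
  by move=> k nk; rewrite /a' (leq_gtF nk) andbF scale0r.
have z2 : forall k, (n <= k)%N -> (g k * a' k) *: e k = 0.
  by move=> k nk; rewrite /a' (leq_gtF nk) andbF mulr0 scale0r.
have [c1 l1] := b_lim_fin _ _ z1; have [c2 l2] := b_lim_fin _ _ z2.
have := Hu a' g M Hg c1 c2; rewrite l1 l2 /series /=.
have -> : \sum_(0 <= k < n) a' k *: e k = \sum_(m <= k < n) a k *: e k.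
  rewrite -[RHS]b_finsum; apply: eq_big_nat => k /andP[_ kn].
  by rewrite /a' kn andbT; case: (m <= k)%N; rewrite ?scale0r.
have -> : \sum_(0 <= k < n) (g k * a' k) *: e k = \sum_(m <= k < n) (g k * a k) *: e k.
  rewrite -[RHS]b_finsum; apply: eq_big_nat => k /andP[_ kn].
  by rewrite /a' kn andbT; case: (m <= k)%N; rewrite ?mulr0 ?scale0r.
by [].
Qed.

Lemma b_sfin_raw (nn : nat -> nat) (c : nat -> R) m n :
  {homo nn : i j / (i < j)%N >-> (i < j)%N} ->
  Cs^-1 * `|\sum_(m <= k < n) c k *: e (nn k)| <= `|\sum_(m <= k < n) c k *: e k|
  /\ `|\sum_(m <= k < n) c k *: e k| <= Cs * `|\sum_(m <= k < n) c k *: e (nn k)|.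
Proof.
move=> Hnn.
pose a' := fun k => if (m <= k)%N && (k < n)%N then c k else 0.
have z1 : forall k, (n <= k)%N -> a' k *: e k = 0.
  by move=> k nk; rewrite /a' (leq_gtF nk) andbF scale0r.
have z2 : forall k, (n <= k)%N -> a' k *: e (nn k) = 0.
  by move=> k nk; rewrite /a' (leq_gtF nk) andbF scale0r.
have [c1 l1] := b_lim_fin _ _ z1; have [c2 l2] := b_lim_fin _ _ z2.
have := Hs nn a' Hnn c1 c2; rewrite l1 l2 /series /=.
have -> : \sum_(0 <= k < n) a' k *: e k = \sum_(m <= k < n) c k *: e k.
  rewrite -[RHS]b_finsum; apply: eq_big_nat => k /andP[_ kn].
  by rewrite /a' kn andbT; case: (m <= k)%N; rewrite ?scale0r.
have -> : \sum_(0 <= k < n) a' k *: e (nn k) = \sum_(m <= k < n) c k *: e (nn k).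
  rewrite -[RHS]b_finsum; apply: eq_big_nat => k /andP[_ kn].
  by rewrite /a' kn andbT; case: (m <= k)%N; rewrite ?scale0r.
by [].
Qed.

Lemma b_Cs1 : 1 <= Cs.
Proof.
have := (@b_sfin_raw id (fun k => 1) 0 1 (fun i j h => h)).2.
by rewrite big_nat1 scale1r Hn mulr1.
Qed.

Lemma b_Cu1 : 1 <= Cu.
Proof.
have := (@b_ufin (fun k => 1) (fun k => 1) 1 0 1 (fun k => ltac:(by rewrite normr1))).
by rewrite !big_nat1 !mulr1 !scale1r Hn mulr1.
Qed.

Lemma b_sfin (nn : nat -> nat) (c : nat -> R) m n :
  {homo nn : i j / (i < j)%N >-> (i < j)%N} ->
  `|\sum_(m <= k < n) c k *: e (nn k)| <= Cs * `|\sum_(m <= k < n) c k *: e k|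
  /\ `|\sum_(m <= k < n) c k *: e k| <= Cs * `|\sum_(m <= k < n) c k *: e (nn k)|.
Proof.
move=> H; have [h1 h2] := b_sfin_raw nn c m n H; split => //.
have Cs0 : 0 < Cs by apply: lt_le_trans b_Cs1.
by rewrite -ler_pdivrMl // mulrC.
Qed.


Lemma b_mult (c g : nat -> R) (M : R) : (forall k, `|g k| <= M) ->
  cvgn (series (fun j => c j *: e j)) ->
  cvgn (series (fun j => (g j * c j) *: e j)) /\
  `|limn (series (fun j => (g j * c j) *: e j))|
     <= Cu * M * `|limn (series (fun j => c j *: e j))|.
Proof.
move=> Hg cc.
have M0 : 0 <= M by apply: le_trans (Hg 0%N); rewrite normr_ge0.
have K0 : 0 <= Cu * M by rewrite mulr_ge0 // (le_trans ler01 b_Cu1).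
by apply: g_comp => // m n _; apply: b_ufin.
Qed.

Lemma b_spread (nn : nat -> nat) (c : nat -> R) :
  {homo nn : i j / (i < j)%N >-> (i < j)%N} ->
  cvgn (series (fun j => c j *: e j)) ->
  cvgn (series (fun j => c j *: e (nn j))) /\
  `|limn (series (fun j => c j *: e (nn j)))|
     <= Cs * `|limn (series (fun j => c j *: e j))|.
Proof.
move=> H cc; apply: g_comp => //; first exact: (le_trans ler01 b_Cs1).
by move=> m n _; have [] := b_sfin nn c m n H.
Qed.

Lemma b_unspread (nn : nat -> nat) (c : nat -> R) :
  {homo nn : i j / (i < j)%N >-> (i < j)%N} ->
  cvgn (series (fun j => c j *: e (nn j))) ->
  cvgn (series (fun j => c j *: e j)) /\
  `|limn (series (fun j => c j *: e j))|
     <= Cs * `|limn (series (fun j => c j *: e (nn j)))|.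
Proof.
move=> H cc; apply: g_comp => //; first exact: (le_trans ler01 b_Cs1).
by move=> m n _; have [] := b_sfin nn c m n H.
Qed.

Lemma b_qge (q : nat -> nat) : {homo q : i j / (i < j)%N >-> (i < j)%N} ->
  forall n, (n <= q n)%N.
Proof.
move=> H; elim=> [|n IH] //.
by apply: leq_ltn_trans IH _; apply: H.
Qed.

Definition inrange (q : nat -> nat) (k : nat) : bool := `[< exists i, q i = k >].

Lemma b_reindex (q : nat -> nat) (f : nat -> X) :
  {homo q : i j / (i < j)%N >-> (i < j)%N} -> forall n,
  \sum_(0 <= i < n) f (q i) =
  \sum_(0 <= k < q n) (if inrange q k then f k else 0).
Proof.
move=> H; have mono := leqW_mono (leq_mono H).
elim=> [|n IH].
  rewrite big_geq // big_nat big1 // => k /andP[_ kq].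
  case: ifP => // /asboolP [i qi]; move: kq; rewrite -qi mono.
  by rewrite ltn0.
rewrite big_nat_recr //= IH (@big_cat_nat _ _ _ (q n) 0 (q n.+1)) //=; last first.
  by apply: ltnW; apply: H.
congr (_ + _); rewrite big_ltn; last by apply: H.
have -> : inrange q (q n) by apply/asboolP; exists n.
rewrite big_nat big1 ?addr0 // => k /andP[qk kq].
case: ifP => // /asboolP [i qi]; move: qk kq; rewrite -qi !mono => a b.
by rewrite ltnS leqNgt a in b.
Qed.

Lemma b_sub (q : nat -> nat) (c : nat -> R) :
  {homo q : i j / (i < j)%N >-> (i < j)%N} ->
  cvgn (series (fun j => c j *: e j)) ->
  cvgn (series (fun i => c (q i) *: e (q i))) /\
  `|limn (series (fun i => c (q i) *: e (q i)))|
     <= Cu * `|limn (series (fun j => c j *: e j))|.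
Proof.
move=> H cc.
pose g k : R := if inrange q k then 1 else 0.
have Hg : forall k, `|g k| <= 1 by move=> k; rewrite /g; case: ifP; rewrite ?normr1 ?normr0.
have [cw bw] := b_mult c g 1 Hg cc.
have E : forall n, series (fun i => c (q i) *: e (q i)) n =
                   series (fun j => (g j * c j) *: e j) (q n).
  move=> n; rewrite /series /= (b_reindex q (fun k => c k *: e k) H n).
  by apply: eq_bigr => k _; rewrite /g; case: ifP; rewrite ?mul1r ?mul0r ?scale0r.
have cv : series (fun i => c (q i) *: e (q i)) @ \oo -->
            limn (series (fun j => (g j * c j) *: e j)).
  have -> : series (fun i => c (q i) *: e (q i)) =
            (fun n => series (fun j => (g j * c j) *: e j) (q n)).
    by apply/funext => n; apply: E.
  exact: g_subseq _ _ _ (b_qge q H) cw.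
split; first by apply/cvg_ex; eexists; exact: cv.
by rewrite (cvg_lim _ cv) //; rewrite mulr1 in bw.
Qed.

Lemma b_coord_bound k (x : X) : `|estar k x| <= Cu * `|x|.
Proof.
pose g j : R := (j == k)%:R.
have Hg : forall j, `|g j| <= 1 by move=> j; rewrite /g; case: (j == k); rewrite ?normr1 ?normr0.
have cx : cvgn (series (fun j => estar j x *: e j)) by apply/cvg_ex; exists x; exact: Hc.
have [_ bw] := b_mult (fun j => estar j x) g 1 Hg cx.
have z : forall n, (k.+1 <= n)%N -> (g n * estar n x) *: e n = 0.
  by move=> n kn; rewrite /g eq_sym (ltn_eqF kn) mul0r scale0r.
have [_ l] := b_lim_fin _ _ z.
move: bw; rewrite l (cvg_lim _ (Hc x)) // mulr1 seriesSr /g eqxx mul1r.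
rewrite /series /= big_nat big1 ?add0r.
  by rewrite normrZ Hn mulr1.
by move=> i /andP[_ ik]; rewrite (ltn_eqF ik) mul0r scale0r.
Qed.


Lemma b_linB k (x y : X) : estar k (x - y) = estar k x - estar k y.
Proof.
have := b_lin k (-1) y x; rewrite scaleN1r mulN1r addrC => ->.
by rewrite addrC.
Qed.

Section Main.
Variables (T : {linear X -> X}) (K delta : R).
Hypotheses (HT : forall x, `|T x| <= K * `|x|) (K0 : 0 <= K)
  (Hd : forall j, delta <= `|estar j (T (e j))|) (d0 : 0 < delta).

Local Notation a k m := (estar k (T (e m))).

Lemma m_abound k m : `|a k m| <= Cu * K.
Proof.
apply: le_trans (b_coord_bound k (T (e m))) _.
by rewrite ler_wpM2l ?(le_trans ler01 b_Cu1) // (le_trans (HT _)) // Hn mulr1.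
Qed.

Lemma m_decay m (sig : R) : 0 < sig -> exists N, forall k, (N <= k)%N -> `|a k m| <= sig.
Proof.
move=> s0.
have cx : cvgn (series (fun j => a j m *: e j)) by apply/cvg_ex; exists (T (e m)); exact: Hc.
move: (cvg_series_cvg_0 cx) => /cvgrPdist_le /(_ sig s0) [N _ HN].
exists N => k Nk; have := HN k Nk; rewrite sub0r normrN normrZ Hn mulr1.
by [].
Qed.

Lemma m_decay_all p (sig : R) : 0 < sig ->
  exists N, forall k, (N <= k)%N -> forall c, (c <= p)%N -> `|a k c| <= sig.
Proof.
move=> s0; elim: p => [|p [N1 H1]].
  have [N HN] := m_decay 0 sig s0; exists N => k Nk c; rewrite leqn0 => /eqP ->.
  exact: HN.
have [N2 H2] := m_decay p.+1 sig s0; exists (maxn N1 N2) => k; rewrite geq_max.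
move=> /andP[k1 k2] c; rewrite leq_eqVlt ltnS => /orP[/eqP -> | cp].
  exact: H2.
exact: H1.
Qed.

Lemma m_refN (tau : R) : 0 < tau -> forall N, exists S : nat -> Prop, infin S /\
  forall r, (r < N)%N -> forall m m', S m -> S m' -> `|a r m - a r m'| <= tau.
Proof.
move=> t0; elim=> [|N [S [iS HS]]].
  by exists (fun _ => True); split => // N; exists N.
have [S' [h1 [h2 h3]]] := p_refine _ (fun m => a N m) (Cu * K) tau t0 (fun m => m_abound N m) S iS.
exists S'; split => // r; rewrite ltnS leq_eqVlt => /orP[/eqP -> | rN] m m' Sm Sm'.
  exact: h3.
by apply: HS => //; apply: h1.
Qed.

Lemma m_select N (tau sig : R) : 0 < tau -> 0 < sig ->
  exists pq : nat * nat, [/\ (N <= pq.1)%N, (pq.1 < pq.2)%N,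
    (forall c, (c <= pq.1)%N -> `|a pq.2 c| <= sig) &
    (forall r, (r < N)%N -> `|a r pq.1 - a r pq.2| <= tau)].
Proof.
move=> t0 s0; have [S [iS HS]] := m_refN tau t0 N.
have [p [Np Sp]] := iS N.
have [N1 H1] := m_decay_all p sig s0.
have [q [Nq Sq]] := iS (maxn N1 p.+1).
rewrite geq_max in Nq; case/andP: Nq => q1 q2.
exists (p, q); split => //=.
- by move=> c cp; apply: H1.
- by move=> r rN; apply: HS.
Qed.


Section Constr.
Variables (kap : R) (P Q : nat -> nat).
Hypotheses (k0 : 0 < kap) (kd : kap <= delta / 2)
  (HP : {homo P : i j / (i < j)%N >-> (i < j)%N})
  (HQ : {homo Q : i j / (i < j)%N >-> (i < j)%N})
  (hdiag : forall j, `|a (Q j) (P j)| <= kap * (2^-1) ^+ (j + j))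
  (hlow : forall i j, (i < j)%N -> `|a (Q i) (P j) - a (Q i) (Q j)| <= kap * (2^-1) ^+ (j + j))
  (hup : forall i j, (j < i)%N -> `|a (Q i) (P j)| <= kap * (2^-1) ^+ (i + i) /\
                                 `|a (Q i) (Q j)| <= kap * (2^-1) ^+ (i + i)).

Local Notation rr := (2^-1 : R).

Lemma c_rr0 : 0 <= rr. Proof. by rewrite invr_ge0 ler0n. Qed.
Lemma c_rr1 : rr <= 1. Proof. by rewrite invf_le1 // ler1n. Qed.
Lemma c_rrlt1 : rr < 1. Proof. by rewrite invf_lt1 // ltr1n. Qed.

Lemma c_pow_le i j : (i <= j)%N -> rr ^+ (j + j) <= rr ^+ i * rr ^+ j.
Proof.
move=> ij; rewrite exprD ler_wpM2r ?exprn_ge0 ?c_rr0 //.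
by apply: ler_wiXn2l => //; rewrite ?c_rr0 ?c_rr1.
Qed.

Lemma c_tol_le j : kap * rr ^+ (j + j) <= kap.
Proof. by apply: ler_piMr; [exact: ltW | exact: exprn_ile1 _ c_rr0 c_rr1]. Qed.

Definition dd j := a (Q j) (P j) - a (Q j) (Q j).

Lemma c_half : delta / 2 = delta * 2^-1. Proof. by []. Qed.
Lemma c_dk : 0 < delta - kap.
Proof.
have h : delta / 2 < delta by rewrite ltr_pdivrMr // mulr_natr mulr2n ltrDl.
by rewrite subr_gt0 (le_lt_trans kd h).
Qed.

Lemma c_dge j : delta - kap <= `|dd j|.
Proof.
have h1 := Hd (Q j); have h2 := hdiag j; have h3 := c_tol_le j.
rewrite /dd; have := lerB_dist (a (Q j) (Q j)) (a (Q j) (P j)).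
rewrite distrC => h4.
have L : forall d k y1 y2 y3 y4 : R, d <= y1 -> y2 <= y3 -> y3 <= k -> y1 - y2 <= y4 -> d - k <= y4.
  move=> d k y1 y2 y3 y4 H1 H2 H3 H4; lra.
exact: L h1 h2 h3 h4.
Qed.

Lemma c_dneq0 j : dd j != 0.
Proof. by rewrite -normr_gt0 (lt_le_trans c_dk (c_dge j)). Qed.

Lemma c_gam j : `|(dd j)^-1| <= (delta - kap)^-1.
Proof.
rewrite normfV lef_pV2 ?posrE ?c_dk ?normr_gt0 ?c_dneq0 //.
exact: c_dge.
Qed.

Lemma c_gam2 j : `|(dd j)^-1| <= 2 / delta.
Proof.
apply: le_trans (c_gam j) _.
rewrite -[2 / delta]invf_div lef_pV2 ?posrE ?c_dk ?divr_gt0 //.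
have L : forall d k : R, k <= d / 2 -> d / 2 <= d - k by move=> d k h; lra.
exact: L.
Qed.

Lemma c_num i j : i != j ->
  `|a (Q i) (P j) - a (Q i) (Q j)| <= 2 * kap * (rr ^+ i * rr ^+ j).
Proof.
have L : forall k x y : R, 0 <= k -> 0 <= x -> x <= y -> k * x <= 2 * k * y.
  by move=> k x y *; nra.
have x0 : forall n, 0 <= rr ^+ n by move=> n; rewrite exprn_ge0 // c_rr0.
rewrite neq_ltn => /orP[ij|ji].
  apply: le_trans (hlow i j ij) _; apply: L; [exact: ltW | exact: x0 | exact: c_pow_le i j (ltnW ij)].
have [h1 h2] := hup i j ji.
apply: le_trans (ler_normB _ _) _.
have h3 : kap * rr ^+ (i + i) <= kap * (rr ^+ i * rr ^+ j).
  apply: ler_wpM2l; first exact: ltW.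
  rewrite [X in _ <= X]mulrC; exact: c_pow_le j i (ltnW ji).
have L2 : forall x y z w : R, x <= z -> y <= z -> z <= w -> x + y <= 2 * w.
  by move=> x y z w *; lra.
by rewrite -mulrA; apply: L2 h1 h2 h3.
Qed.


Lemma c_lin_cont (f : X -> X) (M : R) : linear f -> (forall x, `|f x| <= M * `|x|) -> continuous f.
Proof.
move=> lf Hf.
exact: (g_lin_cont (HB.pack_for (@GRing.Linear.type R X X *:%R) f
          (GRing.isLinear.Build R X X *:%R f lf)) M Hf).
Qed.

Lemma c_lin_sum (f : X -> X) (c : nat -> R) (v : nat -> X) n : linear f ->
  f (\sum_(0 <= j < n) c j *: v j) = \sum_(0 <= j < n) c j *: f (v j).
Proof.
move=> lf.
pose fl : {linear X -> X} := HB.pack_for (@GRing.Linear.type R X X *:%R) f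
          (GRing.isLinear.Build R X X *:%R f lf).
have -> : f (\sum_(0 <= j < n) c j *: v j) = fl (\sum_(0 <= j < n) c j *: v j) by [].
rewrite linear_sum; apply: eq_bigr => j _.
by rewrite linearZ.
Qed.

Definition Sp (nn : nat -> nat) (x : X) : X := limn (series (fun j => estar j x *: e (nn j))).

Lemma c_Sp_cvg nn x : {homo nn : i j / (i < j)%N >-> (i < j)%N} ->
  cvgn (series (fun j => estar j x *: e (nn j))) /\ `|Sp nn x| <= Cs * `|x|.
Proof.
move=> H.
have cx : cvgn (series (fun j => estar j x *: e j)) by apply/cvg_ex; exists x; exact: Hc.
have [c b] := b_spread nn (fun j => estar j x) H cx.
by split => //; rewrite (cvg_lim _ (Hc x)) // in b.
Qed.

Lemma c_Sp_lin nn : {homo nn : i j / (i < j)%N >-> (i < j)%N} -> linear (Sp nn).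
Proof.
move=> H; apply: (g_lins (fun j x => estar j x *: e (nn j))).
  by move=> n c x y; rewrite b_lin scalerDl scalerA.
by move=> x; exact: (c_Sp_cvg nn x H).1.
Qed.

Lemma c_Sp_e nn j : Sp nn (e j) = e (nn j).
Proof.
rewrite /Sp.
have -> : (fun k => estar k (e j) *: e (nn k)) = (fun k => (k == j)%:R *: e (nn k)).
  by apply/funext => k; rewrite b_e.
have z : forall k, (j.+1 <= k)%N -> (k == j)%:R *: e (nn k) = 0.
  by move=> k jk; rewrite gtn_eqF // scale0r.
have [_ ->] := b_lim_fin _ _ z.
rewrite seriesSr eqxx scale1r /series /= big_nat big1 ?add0r //.
by move=> k /andP[_ kj]; rewrite (ltn_eqF kj) scale0r.
Qed.

Definition Bf (x : X) : X := Sp P x - Sp Q x.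

Lemma c_B_lin : linear Bf.
Proof.
move=> c x y; rewrite /Bf (c_Sp_lin P HP) (c_Sp_lin Q HQ).
by rewrite scalerBr opprD addrACA.
Qed.

Lemma c_B_bound x : `|Bf x| <= (2 * Cs) * `|x|.
Proof.
apply: le_trans (ler_normB _ _) _.
have [_ h1] := c_Sp_cvg P x HP; have [_ h2] := c_Sp_cvg Q x HQ.
have L : forall u v w : R, u <= w -> v <= w -> u + v <= 2 * w by move=> u v w *; lra.
by rewrite -mulrA; apply: L.
Qed.

Lemma c_B_e j : Bf (e j) = e (P j) - e (Q j).
Proof. by rewrite /Bf !c_Sp_e. Qed.

Definition CQ := Cu * (delta - kap)^-1 * (Cs * Cu).

Definition Qf (y : X) : X := limn (series (fun i => ((dd i)^-1 * estar (Q i) y) *: e i)).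

Lemma c_Q_cvg y : cvgn (series (fun i => ((dd i)^-1 * estar (Q i) y) *: e i)) /\
  `|Qf y| <= CQ * `|y|.
Proof.
have cx : cvgn (series (fun j => estar j y *: e j)) by apply/cvg_ex; exists y; exact: Hc.
have [c1 b1] := b_sub Q (fun k => estar k y) HQ cx.
have [c2 b2] := b_unspread Q (fun i => estar (Q i) y) HQ c1.
have [c3 b3] := b_mult (fun i => estar (Q i) y) (fun i => (dd i)^-1) ((delta - kap)^-1) c_gam c2.
split => //; rewrite (cvg_lim _ (Hc y)) // in b1.
have Cu0 : 0 <= Cu by apply: le_trans b_Cu1.
have Cs0 : 0 <= Cs by apply: le_trans b_Cs1.
have g0 : 0 <= (delta - kap)^-1 by rewrite invr_ge0 ltW // c_dk.
apply: le_trans b3 _; rewrite /CQ -!mulrA; apply: ler_wpM2l => //.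
apply: ler_wpM2l => //; apply: le_trans b2 _; apply: ler_wpM2l => //.
Qed.

Lemma c_Q_lin : linear Qf.
Proof.
apply: (g_lins (fun i y => ((dd i)^-1 * estar (Q i) y) *: e i)).
  by move=> n c x y; rewrite b_lin mulrDr scalerDl scalerA mulrCA.
by move=> x; exact: (c_Q_cvg x).1.
Qed.

Lemma c_Q_coord i y : estar i (Qf y) = (dd i)^-1 * estar (Q i) y.
Proof. exact: (b_coord (fun i => (dd i)^-1 * estar (Q i) y) (Qf y) (c_Q_cvg y).1 i). Qed.


Definition Ef (x : X) : X := Qf (T (Bf x)) - x.

Lemma c_E_lin : linear Ef.
Proof.
move=> c x y; rewrite /Ef c_B_lin linearP c_Q_lin.
by rewrite scalerBr opprD addrACA.
Qed.

Lemma c_CQ0 : 0 <= CQ.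
Proof.
have Cu0 : 0 <= Cu by apply: le_trans b_Cu1.
have Cs0 : 0 <= Cs by apply: le_trans b_Cs1.
have g0 : 0 <= (delta - kap)^-1 by rewrite invr_ge0 ltW // c_dk.
by rewrite /CQ !mulr_ge0.
Qed.

Lemma c_E_cont : continuous Ef.
Proof.
apply: (c_lin_cont Ef (CQ * (K * (2 * Cs)) + 1) c_E_lin) => x.
rewrite /Ef; apply: le_trans (ler_normB _ _) _; rewrite mulrDl mul1r lerD2r.
have hb : `|T (Bf x)| <= K * (2 * Cs) * `|x|.
  apply: le_trans (HT _) _; rewrite -mulrA; apply: ler_wpM2l => //; exact: c_B_bound.
apply: le_trans (proj2 (c_Q_cvg _)) _.
by apply: le_trans (ler_wpM2l c_CQ0 hb) _; rewrite !mulrA.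
Qed.

Lemma c_E_coord i j : estar i (Ef (e j)) =
  (dd i)^-1 * (a (Q i) (P j) - a (Q i) (Q j)) - (i == j)%:R.
Proof. by rewrite /Ef b_linB c_Q_coord c_B_e linearB b_linB b_e. Qed.

Lemma c_E_coef i j : `|estar i (Ef (e j))| <= (4 * kap / delta) * rr ^+ j * rr ^+ i.
Proof.
have x0 : forall n, 0 <= rr ^+ n by move=> n; rewrite exprn_ge0 // c_rr0.
have C0 : 0 <= (4 * kap / delta) by rewrite divr_ge0 ?mulr_ge0 ?ltW.
rewrite c_E_coord; have [->|ij] := eqVneq i j.
  rewrite -/(dd j) mulVf ?c_dneq0 // subrr normr0.
  by rewrite mulr_ge0 ?x0 // mulr_ge0 ?x0.
rewrite subr0 normrM.
apply: le_trans (ler_pM (normr_ge0 _) (normr_ge0 _) (c_gam2 i) (c_num i j ij)) _.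
suff -> : 2 / delta * (2 * kap * (rr ^+ i * rr ^+ j)) = 4 * kap / delta * rr ^+ j * rr ^+ i by [].
ring.
Qed.


Lemma c_E_e j : `|Ef (e j)| <= (4 * kap / delta) * rr ^+ j / (1 - rr).
Proof.
have C0 : 0 <= (4 * kap / delta) * rr ^+ j.
  by rewrite mulr_ge0 ?exprn_ge0 ?c_rr0 // divr_ge0 ?mulr_ge0 ?ltW.
have [_ b] := g_geo (fun i => estar i (Ef (e j)) *: e i) _ _ C0 c_rr0 c_rrlt1
   (fun i => ltac:(by rewrite normrZ Hn mulr1; exact: c_E_coef)).
by rewrite (cvg_lim _ (Hc (Ef (e j)))) // in b.
Qed.

Definition eps := Cu * (4 * kap / delta) / (1 - rr) / (1 - rr).

Lemma c_eps0 : 0 <= eps.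
Proof.
have Cu0 : 0 <= Cu by apply: le_trans b_Cu1.
have r0 : 0 <= (1 - rr)^-1 by rewrite invr_ge0 subr_ge0 c_rr1.
have q0 : 0 <= 4 * kap / delta.
  apply: divr_ge0; last exact: ltW.
  by apply: mulr_ge0; [exact: ler0n | exact: ltW].
by rewrite /eps; apply: mulr_ge0 => //; apply: mulr_ge0 => //; apply: mulr_ge0.
Qed.

Lemma c_E_bound x : `|Ef x| <= eps * `|x|.
Proof.
have cv : series (fun j => estar j x *: Ef (e j)) @ \oo --> Ef x.
  have -> : series (fun j => estar j x *: Ef (e j)) =
            (fun n => Ef (series (fun j => estar j x *: e j) n)).
    by apply/funext => n; rewrite /series /= c_lin_sum //; exact: c_E_lin.
  exact: (cvg_comp _ _ (Hc x) (c_E_cont x)).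
have Cu0 : 0 <= Cu by apply: le_trans b_Cu1.
have r0 : 0 <= (1 - rr)^-1 by rewrite invr_ge0 subr_ge0 c_rr1.
have C0 : 0 <= Cu * `|x| * (4 * kap / delta) / (1 - rr).
  have q0 : 0 <= 4 * kap / delta.
    apply: divr_ge0; last exact: ltW.
    by apply: mulr_ge0; [exact: ler0n | exact: ltW].
  by apply: mulr_ge0 => //; apply: mulr_ge0 => //; apply: mulr_ge0.
have H : forall j, `|estar j x *: Ef (e j)| <= Cu * `|x| * (4 * kap / delta) / (1 - rr) * rr ^+ j.
  move=> j; rewrite normrZ.
  apply: le_trans (ler_pM (normr_ge0 _) (normr_ge0 _) (b_coord_bound j x) (c_E_e j)) _.
  by rewrite le_eqVlt; apply/orP; left; apply/eqP; ring.
have [_ b] := g_geo _ _ _ C0 c_rr0 c_rrlt1 H.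
rewrite (cvg_lim _ cv) // in b; apply: le_trans b _.
by rewrite le_eqVlt; apply/orP; left; apply/eqP; rewrite /eps; ring.
Qed.

Hypothesis heps : eps < 1.

Definition Fn (z : X) : X := - Ef z.

Lemma c_iter_lin n (c : R) x y : iter n Fn (c *: x + y) = c *: iter n Fn x + iter n Fn y.
Proof. by elim: n => //= n ->; rewrite /Fn c_E_lin opprD scalerN. Qed.

Lemma c_iter_bound n x : `|iter n Fn x| <= eps ^+ n * `|x|.
Proof.
elim: n => [|n IH] /=; first by rewrite expr0 mul1r.
rewrite /Fn normrN; apply: le_trans (c_E_bound _) _.
rewrite exprS -mulrA; apply: (ler_wpM2l c_eps0); exact: IH.
Qed.

Definition Sf (x : X) : X := limn (series (fun n => iter n Fn x)).

Lemma c_S_cvg x : cvgn (series (fun n => iter n Fn x)) /\ `|Sf x| <= `|x| / (1 - eps).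
Proof.
apply: (g_geo _ _ _ (normr_ge0 x) c_eps0 heps) => n.
by rewrite mulrC; apply: c_iter_bound.
Qed.

Lemma c_S_lin : linear Sf.
Proof.
apply: (g_lins (fun n x => iter n Fn x)); first exact: c_iter_lin.
by move=> x; exact: (c_S_cvg x).1.
Qed.

Lemma c_iterN n z : iter n Fn (- z) = - iter n Fn z.
Proof.
have := c_iter_lin n (-1) z 0.
have h0 : forall m, iter m Fn 0 = 0.
  pose El : {linear X -> X} := HB.pack_for (@GRing.Linear.type R X X *:%R) Ef
          (GRing.isLinear.Build R X X *:%R Ef c_E_lin).
  have E0 : Ef 0 = 0 by exact: (linear0 El).
  by elim=> //= m ->; rewrite /Fn E0 oppr0.
by rewrite h0 !addr0 !scaleN1r.
Qed.

Lemma c_S_inv x : Sf (x + Ef x) = x.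
Proof.
have key : forall N, series (fun n => iter n Fn (x + Ef x)) N = x - iter N Fn x.
  elim=> [|N IH]; first by rewrite /series /= big_geq // subrr.
  rewrite seriesSr IH.
  have -> : x + Ef x = 1 *: x + Ef x by rewrite scale1r.
  rewrite c_iter_lin scale1r.
  have -> : Ef x = - Fn x by rewrite /Fn opprK.
  rewrite c_iterN -iterSr.
  by rewrite addrA subrK.
have h0 : (fun n => iter n Fn x) @ \oo --> 0 by apply: cvg_series_cvg_0; exact: (c_S_cvg x).1.
rewrite /Sf; apply: cvg_lim => //.
have -> : series (fun n => iter n Fn (x + Ef x)) = (fun N => x - iter N Fn x).
  by apply/funext => N; apply: key.
rewrite -[X in _ --> X]subr0; apply: cvgB => //; exact: cvg_cst.
Qed.

Lemma c_final : exists A B : {linear X -> X},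
  [/\ continuous A, continuous B, (forall x, A (T (B x)) = x),
      (forall x, `|A x| <= (CQ / (1 - eps)) * `|x|) &
      (forall x, `|B x| <= (2 * Cs) * `|x|)].
Proof.
have e1 : 0 < 1 - eps by rewrite subr_gt0.
have Alin : linear (fun x => Sf (Qf x)).
  by move=> c x y /=; rewrite c_Q_lin c_S_lin.
have Abd : forall x, `|Sf (Qf x)| <= (CQ / (1 - eps)) * `|x|.
  move=> x; apply: le_trans (proj2 (c_S_cvg _)) _.
  rewrite mulrAC ler_pdivrMr // divfK ?gt_eqF //.
  exact: (proj2 (c_Q_cvg x)).
exists (HB.pack_for (@GRing.Linear.type R X X *:%R) (fun x => Sf (Qf x))
          (GRing.isLinear.Build R X X *:%R (fun x => Sf (Qf x)) Alin)).
exists (HB.pack_for (@GRing.Linear.type R X X *:%R) Bf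
          (GRing.isLinear.Build R X X *:%R Bf c_B_lin)).
split.
- exact: (c_lin_cont _ _ Alin Abd).
- exact: (c_lin_cont _ _ c_B_lin c_B_bound).
- move=> x /=; have -> : Qf (T (Bf x)) = x + Ef x by rewrite /Ef addrC subrK.
  exact: c_S_inv.
- exact: Abd.
- exact: c_B_bound.
Qed.

End Constr.

Lemma m_PQ (kap : R) : 0 < kap -> exists P Q : nat -> nat,
  [/\ {homo P : i j / (i < j)%N >-> (i < j)%N},
      {homo Q : i j / (i < j)%N >-> (i < j)%N},
      (forall j, `|a (Q j) (P j)| <= kap * (2^-1) ^+ (j + j)),
      (forall i j, (i < j)%N -> `|a (Q i) (P j) - a (Q i) (Q j)| <= kap * (2^-1) ^+ (j + j)) &
      (forall i j, (j < i)%N -> `|a (Q i) (P j)| <= kap * (2^-1) ^+ (i + i) /\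
                                 `|a (Q i) (Q j)| <= kap * (2^-1) ^+ (i + i))].
Proof.
move=> k0.
have tol0 : forall j : nat, 0 < kap * (2^-1) ^+ (j + j).
  by move=> j; rewrite mulr_gt0 // exprn_gt0 // invr_gt0.
have ex := fun N j => m_select N _ _ (tol0 j) (tol0 j).
pose f N j := proj1_sig (cid (ex N j)).
have fP := fun N j => proj2_sig (cid (ex N j)).
pose P j := (seqpr f j).1; pose Q j := (seqpr f j).2.
pose Nj j := match j with 0%N => 0%N | j'.+1 => (Q j').+1 end.
have sp : forall j, [/\ (Nj j <= P j)%N, (P j < Q j)%N,
    (forall c, (c <= P j)%N -> `|a (Q j) c| <= kap * (2^-1) ^+ (j + j)) &
    (forall r, (r < Nj j)%N -> `|a r (P j) - a r (Q j)| <= kap * (2^-1) ^+ (j + j))].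
  by case=> [|j]; exact: fP.
have PQ : forall j, (P j < Q j)%N by move=> j; have [] := sp j.
have QP : forall j, (Q j < P j.+1)%N by move=> j; have [] := sp j.+1.
have HP : {homo P : i j / (i < j)%N >-> (i < j)%N}.
  by apply: homo_ltn; [exact: ltn_trans | move=> i; exact: ltn_trans (PQ i) (QP i)].
have HQ : {homo Q : i j / (i < j)%N >-> (i < j)%N}.
  by apply: homo_ltn; [exact: ltn_trans | move=> i; exact: ltn_trans (QP i) (PQ i.+1)].
have mP := leq_mono HP; have mQ := leq_mono HQ.
exists P, Q; split => //.
- by move=> j; have [_ _ h _] := sp j; apply: h.
- move=> i j ij; have [_ _ _ h] := sp j; apply: h.
  case: j ij => [//|j] ij /=; rewrite ltnS mQ; by rewrite ltnS in ij.
- move=> i j ji; have [_ _ h _] := sp i.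
  have QjPi : (Q j <= P i)%N by apply: ltnW; apply: leq_trans (QP j) _; rewrite mP.
  split; apply: h => //; apply: leq_trans QjPi; exact: ltnW (PQ j).
Qed.

Lemma m_fact (kap : R) : 0 < kap -> kap <= delta / 2 ->
  Cu * (4 * kap / delta) / (1 - 2^-1) / (1 - 2^-1) < 1 ->
  exists A B : {linear X -> X},
  [/\ continuous A, continuous B, (forall x, A (T (B x)) = x),
      (forall x, `|A x| <= (Cu * (delta - kap)^-1 * (Cs * Cu) /
          (1 - Cu * (4 * kap / delta) / (1 - 2^-1) / (1 - 2^-1))) * `|x|) &
      (forall x, `|B x| <= (2 * Cs) * `|x|)].
Proof.
move=> k0 kd heps; have [P [Q [HP HQ h1 h2 h3]]] := m_PQ kap k0.
exact: (@c_final kap P Q k0 kd HP HQ h1 h2 h3 heps).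
Qed.

End Main.

Lemma basis_main (T : {linear X -> X}) : bounded_op T ->
  0 < inf [set `|estar j (T (e j))| | j in [set: nat]] ->
  forall eta : R, 0 < eta ->
  exists A B : {linear X -> X},
    [/\ bounded_op A, bounded_op B,
        (forall x : X, A (T (B x)) = x) &
        opnorm A * opnorm B
          <= 2 * Cu ^+ 5 * Cs ^+ 3
               / inf [set `|estar j (T (e j))| | j in [set: nat]] + eta].
Proof.
move=> HTc; set delta := inf _ => d0 eta e0.
have [M [_ HM]] := (linear_boundedP T).1 (continuous_linear_bounded 0 (HTc 0)).
pose K := `|M| + 1.
have HK : forall x, `|T x| <= K * `|x|.
  by apply: HM; rewrite /K ltr_pwDr // ler_norm.
have K0 : 0 <= K by rewrite /K addr_ge0.
have Hd : forall j, delta <= `|estar j (T (e j))|.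
  move=> j; apply: ge_inf; last by exists j.
  by exists 0 => y [i _ <-].
have [kap [k0 kd heps hfin]] := @arith _ Cu Cs delta eta b_Cu1 b_Cs1 d0 e0.
have [A [B [cA cB AB bA bB]]] := @m_fact T K delta HK K0 Hd d0 kap k0 kd heps.
exists A, B; split => //.
have Cs0 : 0 <= 2 * Cs by rewrite mulr_ge0 // (le_trans ler01 b_Cs1).
have e1 : 0 < 1 - Cu * (4 * kap / delta) / (1 - 2^-1) / (1 - 2^-1) by rewrite subr_gt0.
have CA0 : 0 <= Cu * (delta - kap)^-1 * (Cs * Cu) /
          (1 - Cu * (4 * kap / delta) / (1 - 2^-1) / (1 - 2^-1)).
  have Cu0 : 0 <= Cu by apply: le_trans b_Cu1.
  have Cs1 : 0 <= Cs by apply: le_trans b_Cs1.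
  have dk : 0 < delta - kap.
    have h : delta / 2 < delta by rewrite ltr_pdivrMr // mulr_natr mulr2n ltrDl.
    by rewrite subr_gt0 (le_lt_trans kd h).
  apply: divr_ge0; last exact: ltW e1.
  apply: mulr_ge0; last exact: mulr_ge0.
  by apply: mulr_ge0 => //; rewrite invr_ge0 ltW.
have [oA0 oA] := g_opnorm _ _ CA0 bA.
have [oB0 oB] := g_opnorm _ _ Cs0 bB.
apply: le_trans hfin; exact: ler_pM.
Qed.

End Basis.


Theorem theorem2p1 (R : realType) (X : completeNormedModType R)
  (e : nat -> X) (estar : nat -> X -> R) (Cu Cs : R)
  (T : {linear X -> X}) :
  schauder_basis e -> normalized e -> subsymmetric Cu Cs e ->
  coord_functionals e estar ->
  bounded_op T ->
  0 < inf [set `|estar j (T (e j))| | j in [set: nat]] ->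
  forall eta : R, 0 < eta ->
  exists A B : {linear X -> X},
    [/\ bounded_op A, bounded_op B,
        (forall x : X, A (T (B x)) = x) &
        opnorm A * opnorm B
          <= 2 * Cu ^+ 5 * Cs ^+ 3
               / inf [set `|estar j (T (e j))| | j in [set: nat]] + eta].
Proof.
move=> Hb Hn [Hu Hs] Hc.
exact: basis_main.
Qed.
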